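(* Let $X=Y\cup Z$ where $Y\cap Z=\emptyset$, $Z$ is a $\sigma$-compact subspace of $X$ and $Y$ is a closed discrete subset of $X$. If $X$ is absolutely strongly star-Lindelöf and $|Y|<\mathfrak{d}$, then $X$ is selectively strongly star-Menger.
   Context: All spaces are regular. $St(A,\mathcal{U})=\bigcup\{U\in\mathcal{U}:U\cap A\neq\emptyset\}$. $\mathfrak{d}$ is the dominating number. $X$ is absolutely strongly star-Lindelöf if for every open cover $\mathcal{U}$ and every dense $D\subseteq X$ there is a countable $C\subseteq D$ with $St(C,\mathcal{U})=X$. $X$ is selectively strongly star-Menger if for every sequence $(\mathcal{U}_n:n\in\omega)$ of open covers and every sequence $(D_n:n\in\omega)$ of dense subsets there are finite $F_n\subseteq D_n$ with $\{St(F_n,\mathcal{U}_n):n\in\omega\}$ covering $X$. *)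

(* Defs.v *)
From HB Require Import structures.
From mathcomp Require Import all_boot all_order all_algebra.
From mathcomp Require Import all_classical all_reals all_analysis.
Set Implicit Arguments. Unset Strict Implicit. Unset Printing Implicit Defensive.
Local Open Scope classical_set_scope.
Local Open Scope card_scope.

Section Defs.
Variable T : topologicalType.

Definition open_cover (U : set (set T)) : Prop :=
  (forall V, U V -> open V) /\ \bigcup_(V in U) V = setT.

Definition star (A : set T) (U : set (set T)) : set T :=
  \bigcup_(V in [set V | U V /\ V `&` A !=set0]) V.

Definition absolutely_strongly_star_Lindelof : Prop :=
  forall (U : set (set T)) (D : set T), open_cover U -> dense D ->
    exists C : set T, C `<=` D /\ countable C /\ star C U = setT.

Definition selectively_strongly_star_Menger : Prop :=
  forall (U : nat -> set (set T)) (D : nat -> set T),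
    (forall n, open_cover (U n)) -> (forall n, dense (D n)) ->
    exists F : nat -> set T,
      (forall n, F n `<=` D n /\ finite_set (F n)) /\
      \bigcup_n star (F n) (U n) = setT.

Definition sigma_compact (Z : set T) : Prop :=
  exists K : nat -> set T, (forall n, compact (K n)) /\ Z = \bigcup_n K n.

Definition discrete_subset (Y : set T) : Prop :=
  forall y, Y y -> exists V : set T, open V /\ V `&` Y = [set y].
End Defs.

Definition dominated_by (g f : nat -> nat) : Prop :=
  exists N, forall n, (N <= n)%N -> (g n <= f n)%N.

Definition dominating_family (F : set (nat -> nat)) : Prop :=
  forall g, exists2 f, F f & dominated_by g f.

(* |A| < d, where d is the least cardinality of a dominating family:
   no dominating family has cardinality <= |A| *)
Definition card_lt_dominating {T} (A : set T) : Prop :=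
  forall F : set (nat -> nat), dominating_family F -> ~ (F #<= A).

(* Main.v *)
Require Import Defs.
From HB Require Import structures.
From mathcomp Require Import all_boot all_order all_algebra.
From mathcomp Require Import finmap all_classical all_reals all_analysis.
Local Open Scope classical_set_scope.

Section P.
Variables (T : topologicalType) (x0 : T).
Definition PT : Type := T.
HB.instance Definition _ := Topological.on PT.
HB.instance Definition _ := isPointed.Build PT x0.
Lemma cc (A : set T) : compact A -> cover_compact A.
Proof. move=> h; have : @cover_compact PT A by rewrite -compact_cover. exact. Qed.
End P.
Lemma cc2 (T : topologicalType) (A : set T) : compact A -> cover_compact A.
Proof.
move=> h; have [[x0 _]|A0] := pselect (A !=set0); first exact: (@cc _ x0 _ h).
move=> I D f _ _; exists fset0%fset => // x Ax; case: A0; by exists x.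
Qed.

Lemma star_mono (T : topologicalType) (A B : set T) (U : set (set T)) :
  A `<=` B -> star A U `<=` star B U.
Proof.
move=> AB x [V [UV [z [Vz Az]]] Vx]; exists V => //; split => //.
by exists z; split => //; apply: AB.
Qed.

Lemma star_open (T : topologicalType) (A : set T) (U : set (set T)) :
  (forall V, U V -> open V) -> open (star A U).
Proof. by move=> Uo; apply: bigcup_open => V [/Uo]. Qed.

Lemma star_pick (T : topologicalType) (A : set T) (U : set (set T)) x :
  star A U x -> exists2 c, A c & star [set c] U x.
Proof.
move=> [V [UV [z [Vz Az]]] Vx]; exists z => //.
by exists V => //; split => //; exists z.
Qed.

Lemma finite_idx (T : Type) (C : set T) (i : T -> nat) m :
  {in C &, injective i} -> finite_set [set x | C x /\ (i x <= m)%N].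
Proof.
move=> inj; apply/finite_set_leP; exists m.+1.
apply/pcard_leP; apply/injfunPex; exists i.
  by move=> x [_ xm] /=; rewrite /= ltnS.
move=> x y; rewrite !inE => -[Cx _] [Cy _] e; apply: inj => //; by rewrite inE.
Qed.

Theorem mainTheorem6 (T : topologicalType) (Y Z : set T) :
  regular_space T ->
  Y `|` Z = setT -> Y `&` Z = set0 ->
  sigma_compact Z ->
  closed Y -> discrete_subset Y ->
  absolutely_strongly_star_Lindelof T ->
  card_lt_dominating Y ->
  selectively_strongly_star_Menger T.
Proof.
move=> _ YZ _ [K [Kc ZK]] _ _ Hassl Hd U D Uc Dd.
have /choice[C HC] : forall n, exists C, C `<=` D n /\ countable C /\ star C (U n) = setT.
  by move=> n; apply: Hassl.
have /choice[idx Hidx] : forall n, exists i : T -> nat, {in C n &, injective i}.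
  by move=> n; apply/countable_injP; case: (HC n) => _ [].
have /choice[E HE] : forall n, exists E, E `<=` C n /\ finite_set E /\
    K n `<=` star E (U n).
  move=> n; have := @cc2 _ _ (Kc n) => /(_ T (C n) (fun c => star [set c] (U n))).
  case.
  - by move=> c _; apply: star_open => V /((Uc n).1).
  - move=> x _; case: (HC n) => _ [_ h]; have : star (C n) (U n) x by rewrite h.
    by case/star_pick => c Cc sc; exists c.
  move=> D' sub cov; exists [set` D']; split; first by move=> x xD; move: (sub x xD); rewrite inE.
  split; first exact: finite_fset.
  move=> x /cov [c /= cD' sc]; apply: star_mono sc => y ->; exact: cD'.
have /choice[G HG] : forall y, exists g : nat -> nat, forall n,
    exists c, C n c /\ (idx n c <= g n)%N /\ star [set c] (U n) y.
  move=> y; suff [g Hg] : {g : nat -> nat & forall n, exists c, C n c /\ (idx n c <= g n)%N /\ star [set c] (U n) y} by exists g.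
  apply: (@choice nat nat (fun n k => exists c, C n c /\ (idx n c <= k)%N /\ star [set c] (U n) y)) => n.
  case: (HC n) => _ [_ h]; have : star (C n) (U n) y by rewrite h.
  by case/star_pick => c Cc sc; exists (idx n c), c.
have : ~ dominating_family (G @` Y).
  by move=> dom; apply: (Hd _ dom); apply: card_image_le.
move=> /existsNP[h nh].
exists (fun n => E n `|` [set x | C n x /\ (idx n x <= h n)%N]); split.
  move=> n; split.
    move=> x [/((HE n).1) Cx|[Cx _]]; exact: (HC n).1.
  rewrite finite_setU; split; first by case: (HE n) => _ [].
  exact: finite_idx.
apply/seteqP; split => // x _.
have : (Y `|` Z) x by rewrite YZ.
case=> [Yx|].
  have /existsNP[n] : ~ forall n, (h n <= G x n)%N.
    by move=> all; apply: nh; exists (G x); [exists x|exists 0%N => n _; apply: all].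
  move=> /negP; rewrite -ltnNge => lt.
  case: (HG x n) => c [Cc [ic sc]]; exists n => //.
  apply: star_mono sc => y -> ; right; split => //.
  by apply: leq_trans ic (ltnW lt).
rewrite ZK => -[n _ Kx]; exists n => //.
by apply: star_mono ((HE n).2.2 _ Kx) => y Ey; left.
Qed.
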